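(* For $R=\mathbb{Z}_9$ and for $R=\mathbb{S}_3=\mathbb{F}_3[X]/(X^2)$ there exists a $(57,5)$-blocking set in $\mathrm{PHG}(2,R)$, i.e. a set of $57$ points meeting every line in at least $5$ points. Equivalently (taking the complement), there exists a projective $(60,7)$-arc in $\mathrm{PHG}(2,R)$.
   Context: For a finite chain ring $R$ of length $2$ with residue field $\mathbb{F}_q$ (here $q=3$, $|R|=9$), the projective Hjelmslev plane $\mathrm{PHG}(2,R)$ is the incidence structure whose points are the free rank-$1$ submodules of the right module $R_R^3$, whose lines are the free rank-$2$ submodules of $R_R^3$, with incidence given by inclusion; it has $q^4+q^3+q^2$ points ($117$ here) and each line contains $q^2+q$ points ($12$ here). A projective $(k,n)$-arc is a set of $k$ points meeting every line in at most $n$ points. *)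

(* Defs.v *)
From HB Require Import structures.
From mathcomp Require Import all_boot all_order all_algebra ring.
Set Implicit Arguments. Unset Strict Implicit. Unset Printing Implicit Defensive.
Import GRing.Theory.
Local Open Scope ring_scope.

(** The ring S_3 = F_3[X]/(X^2), represented as a + b*eps (eps = class of X,
    eps^2 = 0) by the pair (a, b) of elements of F_3. *)
Definition S3 : Type := ('F_3 * 'F_3)%type.
HB.instance Definition _ := Finite.on S3.
HB.instance Definition _ := GRing.Zmodule.on S3.

Definition S3_one : S3 := (1, 0).
Definition S3_mul (x y : S3) : S3 := (x.1 * y.1, x.1 * y.2 + x.2 * y.1).

Lemma S3_mulA : associative S3_mul.
Proof. by case=> a b [c d] [e f]; rewrite /S3_mul /=; congr pair; ring. Qed.
Lemma S3_mulC : commutative S3_mul.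
Proof. by case=> a b [c d]; rewrite /S3_mul /=; congr pair; ring. Qed.
Lemma S3_mul1 : left_id S3_one S3_mul.
Proof. by case=> a b; rewrite /S3_mul /S3_one /=; congr pair; ring. Qed.
Lemma S3_mulDl : left_distributive S3_mul +%R.
Proof.
case=> a b [c d] [e f]; rewrite /S3_mul /=.
transitivity (a * e + c * e, a * f + b * e + (c * f + d * e)); last by [].
by congr pair; ring.
Qed.
Lemma S3_one_neq0 : S3_one != 0.
Proof. by []. Qed.

HB.instance Definition _ := GRing.Zmodule_isComNzRing.Build S3
  S3_mulA S3_mulC S3_mul1 S3_mulDl S3_one_neq0.

(** Projective Hjelmslev plane PHG(2,R) over a finite commutative ring R,
    using the module R^3 as row vectors 'rV[R]_3 (R is commutative, so the
    right module structure is given by scaling).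
    A submodule M of R^3 is free of rank 1 iff it has a basis {x}, i.e.
    M = xR and r |-> x r is injective; free of rank 2 iff it has a basis
    {x, y}, i.e. M = xR + yR and (r, s) |-> x r + y s is injective. *)
Section PHG.
Variable R : finComNzRingType.
Notation V := 'rV[R]_3.

Definition span1 (x : V) : {set V} := [set r *: x | r : R].
Definition span2 (x y : V) : {set V} := [set r *: x + s *: y | r : R, s : R].

Definition is_point (P : {set V}) : Prop :=
  exists x : V, P = span1 x /\ injective (fun r : R => r *: x).

Definition is_line (L : {set V}) : Prop :=
  exists x y : V, L = span2 x y /\
    injective (fun rs : R * R => rs.1 *: x + rs.2 *: y).

Definition on_line (S : {set {set V}}) (L : {set V}) : {set {set V}} :=
  [set P in S | P \subset L].

Definition blocking_set (k n : nat) (B : {set {set V}}) : Prop :=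
  (forall P, P \in B -> is_point P) /\ #|B| = k /\
  (forall L, is_line L -> n <= #|on_line B L|)%N.

Definition proj_arc (k n : nat) (A : {set {set V}}) : Prop :=
  (forall P, P \in A -> is_point P) /\ #|A| = k /\
  (forall L, is_line L -> #|on_line A L| <= n)%N.
End PHG.

(* Main.v *)
From HB Require Import structures.
From mathcomp Require Import all_boot all_algebra ring.
Require Import Defs.
Set Implicit Arguments. Unset Strict Implicit. Unset Printing Implicit Defensive.
Import GRing.Theory.
Local Open Scope ring_scope.

Definition o0 : 'I_3 := @Ordinal 3 0 isT.
Definition o1 : 'I_3 := @Ordinal 3 1 isT.
Definition o2 : 'I_3 := @Ordinal 3 2 isT.
Lemma ord3P (i : 'I_3) : i = o0 \/ i = o1 \/ i = o2.
Proof.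
case: i => [[|[|[|//]]] p]; [left|right;left|right;right]; exact/val_inj.
Qed.

Section Gen.
Variable R : finComNzRingType.
Variable t : R.
Hypothesis tnz : t != 0.
Variable E : seq R.
Hypothesis Ec : forall a : R, a \in E.
Hypothesis canc_b : all (fun a => all (fun d => (t * a != 0) ==> (a * d == 0) ==> (d == 0)) E) E.
Lemma canc : forall a d : R, t * a != 0 -> a * d = 0 -> d = 0.
Proof.
move=> a d h1 /eqP h2; move/allP: canc_b => /(_ a (Ec a)) /allP /(_ d (Ec d)).
by rewrite h1 h2 => /eqP.
Qed.
Definition all3 (P : R * R * R -> bool) :=
  all (fun a => all (fun b => all (fun c => P (a, b, c)) E) E) E.
Lemma all3P P : all3 P -> forall w, P w.
Proof.
move=> h [[a b] c]; move/allP: h => /(_ a (Ec a)) /allP /(_ b (Ec b)) /allP.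
exact.
Qed.
Notation V := 'rV[R]_3.
Notation T3 := (R * R * R)%type.

Definition ent (v : V) i := v ord0 i.
Definition dot (v : V) (w : T3) := ent v o0 * w.1.1 + ent v o1 * w.1.2 + ent v o2 * w.2.
Definition cross (x y : V) : T3 :=
  (ent x o1 * ent y o2 - ent x o2 * ent y o1,
   ent x o2 * ent y o0 - ent x o0 * ent y o2,
   ent x o0 * ent y o1 - ent x o1 * ent y o0).
Definition good (w : T3) := [|| t * w.1.1 != 0, t * w.1.2 != 0 | t * w.2 != 0].
Definition kerset (w : T3) : {set V} := [set v | dot v w == 0].

Lemma entZ r (v : V) i : ent (r *: v) i = r * ent v i.
Proof. by rewrite /ent mxE. Qed.
Lemma entD (v u : V) i : ent (v + u) i = ent v i + ent u i.
Proof. by rewrite /ent mxE. Qed.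
Lemma ent0 i : ent (0 : V) i = 0.
Proof. by rewrite /ent mxE. Qed.
Lemma vecP (v u : V) : ent v o0 = ent u o0 -> ent v o1 = ent u o1 ->
  ent v o2 = ent u o2 -> v = u.
Proof.
move=> e0 e1 e2; apply/rowP => j; rewrite -!/(ent _ _).
by case: (ord3P j) => [->|[->|->]].
Qed.

Lemma cross_good x y :
  injective (fun rs : R * R => rs.1 *: x + rs.2 *: y) -> good (cross x y).
Proof.
move=> inj; apply/negPn/negP; rewrite /good !negb_or !negbK /cross /=.
case/and3P => /eqP H0 /eqP H1 /eqP H2.
have key : forall r s : R, r *: x + s *: y = 0 -> r = 0 /\ s = 0.
  move=> r s e; have := inj (r, s) (0, 0); rewrite /= !scale0r addr0 => /(_ e).
  by case.
case: (boolP [forall i : 'I_3, t * ent x i == 0]) => [/forallP Hx | ].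
  have Ex : t *: x + 0 *: y = 0.
    by apply: vecP; rewrite !entD !entZ ent0 mul0r addr0; apply/eqP.
  have [] := key _ _ Ex.
  by move=> /eqP; rewrite (negbTE tnz).
rewrite negb_forall => /existsP [i Hi].
have Ex : (- (t * ent y i)) *: x + (t * ent x i) *: y = 0.
  apply: vecP; rewrite !entD !entZ !ent0;
  case: (ord3P i) => [->|[->|->]];
  by first [ ring | rewrite -H0; ring | rewrite -H1; ring | rewrite -H2; ring
           | rewrite -oppr0 -H0; ring | rewrite -oppr0 -H1; ring
           | rewrite -oppr0 -H2; ring ].
have [_ /eqP] := key _ _ Ex.
by rewrite (negbTE Hi).
Qed.

Lemma span2_ker x y : span2 x y \subset kerset (cross x y).
Proof.
apply/subsetP => v /imset2P [r s _ _ ->].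
rewrite inE /dot /cross !entD !entZ /=; apply/eqP; ring.
Qed.

Lemma card_span2 x y :
  injective (fun rs : R * R => rs.1 *: x + rs.2 *: y) ->
  #|span2 x y| = (#|R| * #|R|)%N.
Proof.
move=> inj.
have -> : span2 x y = [set (fun rs : R * R => rs.1 *: x + rs.2 *: y) rs | rs in [set: R * R]].
  apply/setP => v; apply/imset2P/imsetP.
    by case=> r s _ _ ->; exists (r, s).
  by case=> [[r s]] _ ->; exists r s.
by rewrite card_imset // cardsT card_prod.
Qed.

Lemma card_ker w : good w -> (#|kerset w| <= #|R| * #|R|)%N.
Proof.
move=> gw.
have H : forall f : V -> R * R, {in kerset w &, injective f} ->
    (#|kerset w| <= #|R| * #|R|)%N.
  by move=> f inj; rewrite -(card_in_imset inj) -card_prod max_card.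
case/or3P: gw => g.
- apply: (H (fun v => (ent v o1, ent v o2))) => u v; rewrite !inE /dot.
  move=> /eqP eu /eqP ev [e1 e2]; apply: vecP => //.
  apply/eqP; rewrite -subr_eq0; apply/eqP; apply: (canc g).
  apply/eqP; rewrite mulrBr subr_eq0; apply/eqP.
  apply: (addIr (ent u o1 * w.1.2 + ent u o2 * w.2)).
  rewrite [in RHS]e1 [in RHS]e2.
  transitivity (dot u w); first by rewrite /dot; ring.
  by rewrite /dot eu -ev; ring.
- apply: (H (fun v => (ent v o0, ent v o2))) => u v; rewrite !inE /dot.
  move=> /eqP eu /eqP ev [e1 e2]; apply: vecP => //.
  apply/eqP; rewrite -subr_eq0; apply/eqP; apply: (canc g).
  apply/eqP; rewrite mulrBr subr_eq0; apply/eqP.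
  apply: (addIr (ent u o0 * w.1.1 + ent u o2 * w.2)).
  rewrite [in RHS]e1 [in RHS]e2.
  transitivity (dot u w); first by rewrite /dot; ring.
  by rewrite /dot eu -ev; ring.
- apply: (H (fun v => (ent v o0, ent v o1))) => u v; rewrite !inE /dot.
  move=> /eqP eu /eqP ev [e1 e2]; apply: vecP => //.
  apply/eqP; rewrite -subr_eq0; apply/eqP; apply: (canc g).
  apply/eqP; rewrite mulrBr subr_eq0; apply/eqP.
  apply: (addIr (ent u o0 * w.1.1 + ent u o1 * w.1.2)).
  rewrite [in RHS]e1 [in RHS]e2.
  transitivity (dot u w); first by rewrite /dot; ring.
  by rewrite /dot eu -ev; ring.
Qed.


Definition mkv (p : T3) : V :=
  \row_(j < 3) (if val j == 0%N then p.1.1 else if val j == 1%N then p.1.2 else p.2).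
Lemma mkv0 p : ent (mkv p) o0 = p.1.1. Proof. by rewrite /ent mxE. Qed.
Lemma mkv1 p : ent (mkv p) o1 = p.1.2. Proof. by rewrite /ent mxE. Qed.
Lemma mkv2 p : ent (mkv p) o2 = p.2. Proof. by rewrite /ent mxE. Qed.
Definition dot3 (p w : T3) := p.1.1 * w.1.1 + p.1.2 * w.1.2 + p.2 * w.2.
Lemma dot_mkv p w : dot (mkv p) w = dot3 p w.
Proof. by rewrite /dot mkv0 mkv1 mkv2. Qed.
Definition smul (r : R) (p : T3) : T3 := (r * p.1.1, r * p.1.2, r * p.2).
Definition distinct (S : seq T3) :=
  all (fun p => all (fun q => all (fun r => (p == smul r q) ==> (p == q)) E) S) S.
Definition pts (S : seq T3) : {set {set V}} := [set span1 (mkv p) | p in S].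

Lemma point_mkv p : good p -> is_point (span1 (mkv p)).
Proof.
move=> gp; exists (mkv p); split => // r s.
have H : forall k, t * ent (mkv p) k != 0 -> r *: mkv p = s *: mkv p -> r = s.
  move=> k g /(congr1 (fun v => ent v k)); rewrite !entZ => e.
  apply/eqP; rewrite -subr_eq0; apply/eqP; apply: (canc g).
  by rewrite mulrBr mulrC e mulrC subrr.
by case/or3P: gp => g; [apply: (H o0) | apply: (H o1) | apply: (H o2)];
  rewrite ?mkv0 ?mkv1 ?mkv2.
Qed.

Lemma span1_inj S : distinct S -> {in S &, injective (fun p => span1 (mkv p))}.
Proof.
move=> dS p q pS qS /= e.
have : mkv p \in span1 (mkv q).
  by rewrite -e; apply/imsetP; exists 1 => //; rewrite scale1r.
case/imsetP => r _ Em.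
have Ep : p = smul r q.
  move: (congr1 (fun v => ent v o0) Em) (congr1 (fun v => ent v o1) Em)
        (congr1 (fun v => ent v o2) Em).
  rewrite /= !entZ !mkv0 !mkv1 !mkv2 /smul.
  by case: p {e Em pS} => [[a b] c] /= -> -> ->.
move/allP: dS => /(_ p pS) /allP /(_ q qS) /allP /(_ r (Ec r)) /implyP.
by rewrite Ep eqxx => /(_ isT) /eqP.
Qed.

Lemma sub_ker v w : (span1 v \subset kerset w) = (dot v w == 0).
Proof.
apply/idP/idP.
  move/subsetP/(_ v); rewrite inE; apply; apply/imsetP; exists 1 => //.
  by rewrite scale1r.
move=> /eqP h; apply/subsetP => u /imsetP [r _ ->]; rewrite inE.
have -> : dot (r *: v) w = r * dot v w by rewrite /dot !entZ; ring.
by rewrite h mulr0.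
Qed.

Lemma count_on S w : uniq S -> distinct S ->
  #|on_line (pts S) (kerset w)| = count (fun p => dot3 p w == 0) S.
Proof.
move=> uS dS.
have -> : on_line (pts S) (kerset w) =
    [set span1 (mkv p) | p in [seq p <- S | dot3 p w == 0]].
  apply/setP => P; rewrite inE; apply/andP/imsetP.
    case=> /imsetP [p pS ->]; rewrite sub_ker dot_mkv => h.
    by exists p; rewrite // mem_filter h.
  case=> p; rewrite mem_filter => /andP [h pS] ->; split.
    by apply/imsetP; exists p.
  by rewrite sub_ker dot_mkv.
rewrite card_in_imset; last first.
  move=> p q pf qf; move: pf qf; rewrite !mem_filter => /andP [_ pS] /andP [_ qS]; exact: (span1_inj dS pS qS).
by rewrite (card_uniqP _) ?filter_uniq // size_filter.
Qed.

Lemma line_ker L : is_line L -> exists w, good w /\ L = kerset w.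
Proof.
case=> x [y [-> inj]]; exists (cross x y); split; first exact: cross_good.
by apply/eqP; rewrite eqEcard span2_ker card_span2 // card_ker // cross_good.
Qed.

Lemma card_pts S : uniq S -> distinct S -> #|pts S| = size S.
Proof. by move=> uS dS; rewrite card_in_imset ?(card_uniqP _) //; apply: span1_inj. Qed.

Lemma pts_points S : all good S -> forall P, P \in pts S -> is_point P.
Proof. by move=> /allP gS P /imsetP [p pS ->]; apply: point_mkv; apply: gS. Qed.

Lemma blocking_ok S k n : uniq S -> distinct S -> all good S -> size S = k ->
  all3 (fun w => good w ==> (n <= count (fun p => dot3 p w == 0%R) S)%N) ->
  blocking_set k n (pts S).
Proof.
move=> uS dS gS sS /all3P cS; split; first exact: pts_points.
split; first by rewrite card_pts.
move=> L /line_ker [w [gw ->]]; rewrite count_on //.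
exact: (implyP (cS w) gw).
Qed.

Lemma arc_ok S k n : uniq S -> distinct S -> all good S -> size S = k ->
  all3 (fun w => good w ==> (count (fun p => dot3 p w == 0%R) S <= n)%N) ->
  proj_arc k n (pts S).
Proof.
move=> uS dS gS sS /all3P cS; split; first exact: pts_points.
split; first by rewrite card_pts.
move=> L /line_ker [w [gw ->]]; rewrite count_on //.
exact: (implyP (cS w) gw).
Qed.

End Gen.
Definition EZ : seq 'Z_9 := [:: 0%:R; 1%:R; 2%:R; 3%:R; 4%:R; 5%:R; 6%:R; 7%:R; 8%:R].
Lemma EZc (a : 'Z_9) : a \in EZ.
Proof. case: a => [[|[|[|[|[|[|[|[|[|//]]]]]]]]] p]; vm_compute; reflexivity. Qed.
Definition ZA : seq ('Z_9 * 'Z_9 * 'Z_9) := [:: (0%:R, 0%:R, 1%:R);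
  (0%:R, 1%:R, 0%:R);
  (0%:R, 1%:R, 4%:R);
  (0%:R, 1%:R, 6%:R);
  (0%:R, 1%:R, 8%:R);
  (0%:R, 3%:R, 1%:R);
  (0%:R, 3%:R, 2%:R);
  (1%:R, 0%:R, 0%:R);
  (1%:R, 0%:R, 3%:R);
  (1%:R, 0%:R, 6%:R);
  (1%:R, 0%:R, 7%:R);
  (1%:R, 0%:R, 8%:R);
  (1%:R, 1%:R, 1%:R);
  (1%:R, 1%:R, 2%:R);
  (1%:R, 1%:R, 4%:R);
  (1%:R, 1%:R, 5%:R);
  (1%:R, 1%:R, 6%:R);
  (1%:R, 2%:R, 1%:R);
  (1%:R, 2%:R, 2%:R);
  (1%:R, 2%:R, 3%:R);
  (1%:R, 2%:R, 7%:R);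
  (1%:R, 2%:R, 8%:R);
  (1%:R, 3%:R, 2%:R);
  (1%:R, 3%:R, 4%:R);
  (1%:R, 4%:R, 0%:R);
  (1%:R, 4%:R, 1%:R);
  (1%:R, 4%:R, 5%:R);
  (1%:R, 4%:R, 7%:R);
  (1%:R, 4%:R, 8%:R);
  (1%:R, 5%:R, 1%:R);
  (1%:R, 5%:R, 4%:R);
  (1%:R, 5%:R, 5%:R);
  (1%:R, 5%:R, 6%:R);
  (1%:R, 5%:R, 8%:R);
  (1%:R, 6%:R, 0%:R);
  (1%:R, 6%:R, 1%:R);
  (1%:R, 6%:R, 3%:R);
  (1%:R, 6%:R, 5%:R);
  (1%:R, 6%:R, 6%:R);
  (1%:R, 7%:R, 2%:R);
  (1%:R, 7%:R, 3%:R);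
  (1%:R, 7%:R, 4%:R);
  (1%:R, 7%:R, 7%:R);
  (1%:R, 7%:R, 8%:R);
  (1%:R, 8%:R, 0%:R);
  (1%:R, 8%:R, 2%:R);
  (1%:R, 8%:R, 4%:R);
  (1%:R, 8%:R, 5%:R);
  (1%:R, 8%:R, 7%:R);
  (3%:R, 0%:R, 2%:R);
  (3%:R, 1%:R, 0%:R);
  (3%:R, 1%:R, 2%:R);
  (3%:R, 1%:R, 6%:R);
  (3%:R, 1%:R, 7%:R);
  (3%:R, 2%:R, 0%:R);
  (3%:R, 2%:R, 1%:R);
  (3%:R, 2%:R, 2%:R);
  (3%:R, 2%:R, 3%:R);
  (3%:R, 3%:R, 2%:R);
  (3%:R, 6%:R, 2%:R)].

Definition ZB : seq ('Z_9 * 'Z_9 * 'Z_9) := [:: (0%:R, 1%:R, 1%:R);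
  (0%:R, 1%:R, 2%:R);
  (0%:R, 1%:R, 3%:R);
  (0%:R, 1%:R, 5%:R);
  (0%:R, 1%:R, 7%:R);
  (1%:R, 0%:R, 1%:R);
  (1%:R, 0%:R, 2%:R);
  (1%:R, 0%:R, 4%:R);
  (1%:R, 0%:R, 5%:R);
  (1%:R, 1%:R, 0%:R);
  (1%:R, 1%:R, 3%:R);
  (1%:R, 1%:R, 7%:R);
  (1%:R, 1%:R, 8%:R);
  (1%:R, 2%:R, 0%:R);
  (1%:R, 2%:R, 4%:R);
  (1%:R, 2%:R, 5%:R);
  (1%:R, 2%:R, 6%:R);
  (1%:R, 3%:R, 0%:R);
  (1%:R, 3%:R, 1%:R);
  (1%:R, 3%:R, 3%:R);
  (1%:R, 3%:R, 5%:R);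
  (1%:R, 3%:R, 6%:R);
  (1%:R, 3%:R, 7%:R);
  (1%:R, 3%:R, 8%:R);
  (1%:R, 4%:R, 2%:R);
  (1%:R, 4%:R, 3%:R);
  (1%:R, 4%:R, 4%:R);
  (1%:R, 4%:R, 6%:R);
  (1%:R, 5%:R, 0%:R);
  (1%:R, 5%:R, 2%:R);
  (1%:R, 5%:R, 3%:R);
  (1%:R, 5%:R, 7%:R);
  (1%:R, 6%:R, 2%:R);
  (1%:R, 6%:R, 4%:R);
  (1%:R, 6%:R, 7%:R);
  (1%:R, 6%:R, 8%:R);
  (1%:R, 7%:R, 0%:R);
  (1%:R, 7%:R, 1%:R);
  (1%:R, 7%:R, 5%:R);
  (1%:R, 7%:R, 6%:R);
  (1%:R, 8%:R, 1%:R);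
  (1%:R, 8%:R, 3%:R);
  (1%:R, 8%:R, 6%:R);
  (1%:R, 8%:R, 8%:R);
  (3%:R, 0%:R, 1%:R);
  (3%:R, 1%:R, 1%:R);
  (3%:R, 1%:R, 3%:R);
  (3%:R, 1%:R, 4%:R);
  (3%:R, 1%:R, 5%:R);
  (3%:R, 1%:R, 8%:R);
  (3%:R, 2%:R, 4%:R);
  (3%:R, 2%:R, 5%:R);
  (3%:R, 2%:R, 6%:R);
  (3%:R, 2%:R, 7%:R);
  (3%:R, 2%:R, 8%:R);
  (3%:R, 3%:R, 1%:R);
  (3%:R, 6%:R, 1%:R)].

Definition tZ : 'Z_9 := 3%:R.
Lemma tZnz : tZ != 0. Proof. by vm_compute. Qed.
Lemma cancZ : all (fun a => all (fun d => (tZ * a != 0) ==> (a * d == 0) ==> (d == 0)) EZ) EZ.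
Proof. vm_compute; reflexivity. Qed.
Lemma chkB : [&& uniq ZB, distinct EZ ZB, all (good tZ) ZB & size ZB == 57%N].
Proof. vm_compute; reflexivity. Qed.
Lemma chkB2 : all3 EZ (fun w => good tZ w ==> (5 <= count (fun p => dot3 p w == 0%R) ZB)%N).
Proof. vm_compute; reflexivity. Qed.
Lemma chkA : [&& uniq ZA, distinct EZ ZA, all (good tZ) ZA & size ZA == 60%N].
Proof. vm_compute; reflexivity. Qed.
Lemma chkA2 : all3 EZ (fun w => good tZ w ==> (count (fun p => dot3 p w == 0%R) ZA <= 7)%N).
Proof. vm_compute; reflexivity. Qed.

Definition E3 : seq 'F_3 := [:: 0%:R; 1%:R; 2%:R].
Lemma E3c (a : 'F_3) : a \in E3.
Proof. case: a => [[|[|[|n]]] p]; try (vm_compute; reflexivity).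
exfalso; vm_compute in p. discriminate. Qed.
Definition ES : seq S3 := [seq (a, b) | a <- E3, b <- E3].
Lemma ESc (a : S3) : a \in ES.
Proof. case: a => a b. apply/allpairsP; exists (a, b); by rewrite /= !E3c. Qed.
Definition SA : seq (S3 * S3 * S3) := [:: ((0%:R, 0%:R), (0%:R, 1%:R), (1%:R, 0%:R));
  ((0%:R, 0%:R), (0%:R, 1%:R), (2%:R, 0%:R));
  ((0%:R, 0%:R), (1%:R, 0%:R), (0%:R, 1%:R));
  ((0%:R, 0%:R), (1%:R, 0%:R), (0%:R, 2%:R));
  ((0%:R, 0%:R), (1%:R, 0%:R), (1%:R, 0%:R));
  ((0%:R, 0%:R), (1%:R, 0%:R), (1%:R, 1%:R));
  ((0%:R, 0%:R), (1%:R, 0%:R), (2%:R, 2%:R));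
  ((0%:R, 1%:R), (0%:R, 0%:R), (1%:R, 0%:R));
  ((0%:R, 1%:R), (0%:R, 0%:R), (2%:R, 0%:R));
  ((0%:R, 1%:R), (0%:R, 1%:R), (1%:R, 0%:R));
  ((0%:R, 1%:R), (0%:R, 1%:R), (2%:R, 0%:R));
  ((0%:R, 1%:R), (1%:R, 0%:R), (0%:R, 0%:R));
  ((0%:R, 1%:R), (1%:R, 0%:R), (0%:R, 1%:R));
  ((0%:R, 1%:R), (1%:R, 0%:R), (1%:R, 1%:R));
  ((0%:R, 1%:R), (1%:R, 0%:R), (1%:R, 2%:R));
  ((0%:R, 1%:R), (1%:R, 0%:R), (2%:R, 2%:R));
  ((0%:R, 1%:R), (2%:R, 0%:R), (0%:R, 0%:R));
  ((0%:R, 1%:R), (2%:R, 0%:R), (0%:R, 1%:R));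
  ((0%:R, 1%:R), (2%:R, 0%:R), (1%:R, 1%:R));
  ((0%:R, 1%:R), (2%:R, 0%:R), (2%:R, 0%:R));
  ((0%:R, 1%:R), (2%:R, 0%:R), (2%:R, 1%:R));
  ((1%:R, 0%:R), (0%:R, 0%:R), (0%:R, 1%:R));
  ((1%:R, 0%:R), (0%:R, 0%:R), (0%:R, 2%:R));
  ((1%:R, 0%:R), (0%:R, 0%:R), (1%:R, 0%:R));
  ((1%:R, 0%:R), (0%:R, 0%:R), (1%:R, 2%:R));
  ((1%:R, 0%:R), (0%:R, 0%:R), (2%:R, 1%:R));
  ((1%:R, 0%:R), (0%:R, 1%:R), (0%:R, 0%:R));
  ((1%:R, 0%:R), (0%:R, 1%:R), (0%:R, 1%:R));
  ((1%:R, 0%:R), (0%:R, 1%:R), (1%:R, 1%:R));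
  ((1%:R, 0%:R), (0%:R, 1%:R), (1%:R, 2%:R));
  ((1%:R, 0%:R), (0%:R, 1%:R), (2%:R, 1%:R));
  ((1%:R, 0%:R), (0%:R, 2%:R), (0%:R, 0%:R));
  ((1%:R, 0%:R), (0%:R, 2%:R), (0%:R, 2%:R));
  ((1%:R, 0%:R), (0%:R, 2%:R), (1%:R, 0%:R));
  ((1%:R, 0%:R), (0%:R, 2%:R), (1%:R, 1%:R));
  ((1%:R, 0%:R), (0%:R, 2%:R), (2%:R, 1%:R));
  ((1%:R, 0%:R), (1%:R, 0%:R), (0%:R, 0%:R));
  ((1%:R, 0%:R), (1%:R, 0%:R), (0%:R, 2%:R));
  ((1%:R, 0%:R), (1%:R, 0%:R), (1%:R, 0%:R));
  ((1%:R, 0%:R), (1%:R, 0%:R), (1%:R, 2%:R));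
  ((1%:R, 0%:R), (1%:R, 0%:R), (2%:R, 2%:R));
  ((1%:R, 0%:R), (1%:R, 1%:R), (0%:R, 0%:R));
  ((1%:R, 0%:R), (1%:R, 1%:R), (0%:R, 1%:R));
  ((1%:R, 0%:R), (1%:R, 1%:R), (1%:R, 1%:R));
  ((1%:R, 0%:R), (1%:R, 1%:R), (1%:R, 2%:R));
  ((1%:R, 0%:R), (1%:R, 1%:R), (2%:R, 1%:R));
  ((1%:R, 0%:R), (1%:R, 2%:R), (0%:R, 1%:R));
  ((1%:R, 0%:R), (1%:R, 2%:R), (0%:R, 2%:R));
  ((1%:R, 0%:R), (1%:R, 2%:R), (1%:R, 0%:R));
  ((1%:R, 0%:R), (1%:R, 2%:R), (1%:R, 1%:R));
  ((1%:R, 0%:R), (1%:R, 2%:R), (2%:R, 0%:R));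
  ((1%:R, 0%:R), (2%:R, 0%:R), (2%:R, 1%:R));
  ((1%:R, 0%:R), (2%:R, 1%:R), (2%:R, 1%:R));
  ((1%:R, 0%:R), (2%:R, 2%:R), (0%:R, 0%:R));
  ((1%:R, 0%:R), (2%:R, 2%:R), (0%:R, 1%:R));
  ((1%:R, 0%:R), (2%:R, 2%:R), (0%:R, 2%:R));
  ((1%:R, 0%:R), (2%:R, 2%:R), (1%:R, 0%:R));
  ((1%:R, 0%:R), (2%:R, 2%:R), (1%:R, 1%:R));
  ((1%:R, 0%:R), (2%:R, 2%:R), (1%:R, 2%:R));
  ((1%:R, 0%:R), (2%:R, 2%:R), (2%:R, 1%:R))].

Definition SB : seq (S3 * S3 * S3) := [:: ((0%:R, 0%:R), (0%:R, 0%:R), (1%:R, 0%:R));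
  ((0%:R, 0%:R), (1%:R, 0%:R), (0%:R, 0%:R));
  ((0%:R, 0%:R), (1%:R, 0%:R), (1%:R, 2%:R));
  ((0%:R, 0%:R), (1%:R, 0%:R), (2%:R, 0%:R));
  ((0%:R, 0%:R), (1%:R, 0%:R), (2%:R, 1%:R));
  ((0%:R, 1%:R), (0%:R, 2%:R), (1%:R, 0%:R));
  ((0%:R, 1%:R), (0%:R, 2%:R), (2%:R, 0%:R));
  ((0%:R, 1%:R), (1%:R, 0%:R), (0%:R, 2%:R));
  ((0%:R, 1%:R), (1%:R, 0%:R), (1%:R, 0%:R));
  ((0%:R, 1%:R), (1%:R, 0%:R), (2%:R, 0%:R));
  ((0%:R, 1%:R), (1%:R, 0%:R), (2%:R, 1%:R));
  ((0%:R, 1%:R), (2%:R, 0%:R), (0%:R, 2%:R));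
  ((0%:R, 1%:R), (2%:R, 0%:R), (1%:R, 0%:R));
  ((0%:R, 1%:R), (2%:R, 0%:R), (1%:R, 2%:R));
  ((0%:R, 1%:R), (2%:R, 0%:R), (2%:R, 2%:R));
  ((1%:R, 0%:R), (0%:R, 0%:R), (0%:R, 0%:R));
  ((1%:R, 0%:R), (0%:R, 0%:R), (1%:R, 1%:R));
  ((1%:R, 0%:R), (0%:R, 0%:R), (2%:R, 0%:R));
  ((1%:R, 0%:R), (0%:R, 0%:R), (2%:R, 2%:R));
  ((1%:R, 0%:R), (0%:R, 1%:R), (0%:R, 2%:R));
  ((1%:R, 0%:R), (0%:R, 1%:R), (1%:R, 0%:R));
  ((1%:R, 0%:R), (0%:R, 1%:R), (2%:R, 0%:R));
  ((1%:R, 0%:R), (0%:R, 1%:R), (2%:R, 2%:R));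
  ((1%:R, 0%:R), (0%:R, 2%:R), (0%:R, 1%:R));
  ((1%:R, 0%:R), (0%:R, 2%:R), (1%:R, 2%:R));
  ((1%:R, 0%:R), (0%:R, 2%:R), (2%:R, 0%:R));
  ((1%:R, 0%:R), (0%:R, 2%:R), (2%:R, 2%:R));
  ((1%:R, 0%:R), (1%:R, 0%:R), (0%:R, 1%:R));
  ((1%:R, 0%:R), (1%:R, 0%:R), (1%:R, 1%:R));
  ((1%:R, 0%:R), (1%:R, 0%:R), (2%:R, 0%:R));
  ((1%:R, 0%:R), (1%:R, 0%:R), (2%:R, 1%:R));
  ((1%:R, 0%:R), (1%:R, 1%:R), (0%:R, 2%:R));
  ((1%:R, 0%:R), (1%:R, 1%:R), (1%:R, 0%:R));
  ((1%:R, 0%:R), (1%:R, 1%:R), (2%:R, 0%:R));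
  ((1%:R, 0%:R), (1%:R, 1%:R), (2%:R, 2%:R));
  ((1%:R, 0%:R), (1%:R, 2%:R), (0%:R, 0%:R));
  ((1%:R, 0%:R), (1%:R, 2%:R), (1%:R, 2%:R));
  ((1%:R, 0%:R), (1%:R, 2%:R), (2%:R, 1%:R));
  ((1%:R, 0%:R), (1%:R, 2%:R), (2%:R, 2%:R));
  ((1%:R, 0%:R), (2%:R, 0%:R), (0%:R, 0%:R));
  ((1%:R, 0%:R), (2%:R, 0%:R), (0%:R, 1%:R));
  ((1%:R, 0%:R), (2%:R, 0%:R), (0%:R, 2%:R));
  ((1%:R, 0%:R), (2%:R, 0%:R), (1%:R, 0%:R));
  ((1%:R, 0%:R), (2%:R, 0%:R), (1%:R, 1%:R));
  ((1%:R, 0%:R), (2%:R, 0%:R), (1%:R, 2%:R));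
  ((1%:R, 0%:R), (2%:R, 0%:R), (2%:R, 0%:R));
  ((1%:R, 0%:R), (2%:R, 0%:R), (2%:R, 2%:R));
  ((1%:R, 0%:R), (2%:R, 1%:R), (0%:R, 0%:R));
  ((1%:R, 0%:R), (2%:R, 1%:R), (0%:R, 1%:R));
  ((1%:R, 0%:R), (2%:R, 1%:R), (0%:R, 2%:R));
  ((1%:R, 0%:R), (2%:R, 1%:R), (1%:R, 0%:R));
  ((1%:R, 0%:R), (2%:R, 1%:R), (1%:R, 1%:R));
  ((1%:R, 0%:R), (2%:R, 1%:R), (1%:R, 2%:R));
  ((1%:R, 0%:R), (2%:R, 1%:R), (2%:R, 0%:R));
  ((1%:R, 0%:R), (2%:R, 1%:R), (2%:R, 2%:R));
  ((1%:R, 0%:R), (2%:R, 2%:R), (2%:R, 0%:R));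
  ((1%:R, 0%:R), (2%:R, 2%:R), (2%:R, 2%:R))].
Definition tS : S3 := (0%:R, 1%:R).
Lemma tSnz : tS != 0. Proof. by vm_compute. Qed.
Lemma cancS : all (fun a => all (fun d => (tS * a != 0) ==> (a * d == 0) ==> (d == 0)) ES) ES.
Proof. vm_compute; reflexivity. Qed.
Lemma chkSB : [&& uniq SB, distinct ES SB, all (good tS) SB & size SB == 57%N].
Proof. vm_compute; reflexivity. Qed.
Lemma chkSB2 : all3 ES (fun w => good tS w ==> (5 <= count (fun p => dot3 p w == 0%R) SB)%N).
Proof. vm_compute; reflexivity. Qed.
Lemma chkSA : [&& uniq SA, distinct ES SA, all (good tS) SA & size SA == 60%N].
Proof. vm_compute; reflexivity. Qed.
Lemma chkSA2 : all3 ES (fun w => good tS w ==> (count (fun p => dot3 p w == 0%R) SA <= 7)%N).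
Proof. vm_compute; reflexivity. Qed.

Local Close Scope ring_scope.

Theorem theorem3p5 :
  ((exists B : {set {set 'rV['Z_9]_3}}, blocking_set 57 5 B) /\
   (exists A : {set {set 'rV['Z_9]_3}}, proj_arc 60 7 A)) /\
  ((exists B : {set {set 'rV[S3]_3}}, blocking_set 57 5 B) /\
   (exists A : {set {set 'rV[S3]_3}}, proj_arc 60 7 A)).
Proof.
split; split.
- exists (pts ZB); case/and4P: chkB => u d g /eqP s.
  exact: (blocking_ok tZnz EZc cancZ u d g s chkB2).
- exists (pts ZA); case/and4P: chkA => u d g /eqP s.
  exact: (arc_ok tZnz EZc cancZ u d g s chkA2).
- exists (pts SB); case/and4P: chkSB => u d g /eqP s.
  exact: (blocking_ok tSnz ESc cancS u d g s chkSB2).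
- exists (pts SA); case/and4P: chkSA => u d g /eqP s.
  exact: (arc_ok tSnz ESc cancS u d g s chkSA2).
Qed.
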